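(* Let $R$ be a number ring, $I$ a non-zero ideal of $R$ and $\mathfrak p$ a maximal ideal of $R$. Then $N(\mathfrak p I)\geq N(I)N(\mathfrak p)$.
   Context: A number ring is a subring of a number field (a finite extension of $\mathbb{Q}$). For a non-zero ideal $I$ of $R$, $N(I)=[R:I]$ is its (finite) index as an additive subgroup. *)

(* Defs.v *)
From HB Require Import structures.
From mathcomp Require Import all_boot all_order all_algebra all_field.
Set Implicit Arguments. Unset Strict Implicit. Unset Printing Implicit Defensive.
Import GRing.Theory.
Local Open Scope ring_scope.

Section NumberRing.
Variable L : fieldExtType rat.

Definition is_subring (R : L -> Prop) : Prop :=
  [/\ R 1, (forall x y, R x -> R y -> R (x - y)) &
      (forall x y, R x -> R y -> R (x * y))].

Definition is_ideal (R I : L -> Prop) : Prop :=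
  [/\ (forall x, I x -> R x), I 0,
      (forall x y, I x -> I y -> I (x - y)) &
      (forall r x, R r -> I x -> I (r * x))].

Definition nonzero_ideal (I : L -> Prop) : Prop := exists x, I x /\ x != 0.

Definition maximal_ideal (R P : L -> Prop) : Prop :=
  [/\ is_ideal R P, ~ P 1 &
      forall J, is_ideal R J -> (forall x, P x -> J x) ->
        (forall x, J x -> P x) \/ J 1].

Definition prod_ideal (P I : L -> Prop) : L -> Prop :=
  fun z => exists s : seq (L * L),
    (forall ab, ab \in s -> P ab.1 /\ I ab.2) /\
    z = \sum_(ab <- s) ab.1 * ab.2.

(* [R : I] = n as additive groups: there are exactly n cosets of I in R,
   witnessed by a complete system r_0, ..., r_(n-1) of distinct coset
   representatives. *)
Definition has_index (R I : L -> Prop) (n : nat) : Prop :=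
  exists r : 'I_n -> L,
    [/\ (forall i, R (r i)),
        (forall i j, I (r i - r j) -> i = j) &
        (forall x, R x -> exists i, I (x - r i))].

End NumberRing.

(* Main.v *)
Require Import Defs.
From mathcomp Require Import all_boot all_order all_algebra all_field.
From mathcomp Require Import zify ring.
From Stdlib Require Import Classical ClassicalEpsilon.
Set Implicit Arguments. Unset Strict Implicit. Unset Printing Implicit Defensive.
Import GRing.Theory Num.Theory.
Local Open Scope ring_scope.

Section Basics.
Variable L : fieldExtType rat.
Variable R : L -> Prop.
Hypothesis hR : is_subring R.

Lemma R1 : R 1. Proof. by case: hR. Qed.
Lemma RB x y : R x -> R y -> R (x - y). Proof. by case: hR => _ H _; apply: H. Qed.
Lemma RM x y : R x -> R y -> R (x * y). Proof. by case: hR => _ _ H; apply: H. Qed.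
Lemma R0 : R 0. Proof. by rewrite -(subrr 1); apply: RB; apply: R1. Qed.
Lemma RN x : R x -> R (- x). Proof. by move=> h; rewrite -sub0r; apply: RB => //; apply: R0. Qed.
Lemma RD x y : R x -> R y -> R (x + y).
Proof. by move=> hx hy; rewrite -(opprK y); apply: RB => //; apply: RN. Qed.
Lemma Rn n : R n%:R.
Proof. elim: n => [|n IH]; first exact: R0. by rewrite -addn1 natrD; apply: RD => //; apply: R1. Qed.
Lemma Rz (z : int) : R z%:~R.
Proof. case: z => n; first exact: Rn. by rewrite NegzE mulrNz; apply: RN; apply: Rn. Qed.
Lemma Rmulz x (z : int) : R x -> R (x *~ z).
Proof. by move=> h; rewrite -mulrzr; apply: RM => //; apply: Rz. Qed.
Lemma Rmuln x n : R x -> R (x *+ n).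
Proof. by move=> h; rewrite -mulr_natr; apply: RM => //; apply: Rn. Qed.
Lemma Rsum (I : Type) (s : seq I) (F : I -> L) : (forall i, R (F i)) -> R (\sum_(i <- s) F i).
Proof. by move=> h; apply: (big_ind R); [exact: R0| exact: RD|]. Qed.
Lemma Rprod (I : Type) (s : seq I) (F : I -> L) : (forall i, R (F i)) -> R (\prod_(i <- s) F i).
Proof. by move=> h; apply: (big_ind R); [exact: R1| exact: RM|]. Qed.

Variable J : L -> Prop.
Hypothesis hJ : is_ideal R J.
Lemma JR x : J x -> R x. Proof. by case: hJ => H _ _ _; apply: H. Qed.
Lemma J0 : J 0. Proof. by case: hJ. Qed.
Lemma JB x y : J x -> J y -> J (x - y). Proof. by case: hJ => _ _ H _; apply: H. Qed.
Lemma JM r x : R r -> J x -> J (r * x). Proof. by case: hJ => _ _ _ H; apply: H. Qed.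
Lemma JMr r x : R r -> J x -> J (x * r). Proof. by move=> *; rewrite mulrC; apply: JM. Qed.
Lemma JN x : J x -> J (- x). Proof. by move=> h; rewrite -sub0r; apply: JB => //; apply: J0. Qed.
Lemma JD x y : J x -> J y -> J (x + y).
Proof. by move=> hx hy; rewrite -(opprK y); apply: JB => //; apply: JN. Qed.
Lemma Jsum (I : Type) (s : seq I) (F : I -> L) : (forall i, J (F i)) -> J (\sum_(i <- s) F i).
Proof. by move=> h; apply: (big_ind J); [exact: J0| exact: JD|]. Qed.
Lemma Jmulz x (z : int) : J x -> J (x *~ z).
Proof. by move=> h; rewrite -mulrzr; apply: JMr => //; apply: Rz. Qed.
End Basics.


Lemma natrL_neq0 (L : fieldExtType rat) n : (0 < n)%N -> (n%:R : L) != 0.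
Proof.
move=> hn; rewrite -(scaler_nat n (1 : L)) scaler_eq0 oner_eq0 orbF.
by rewrite pnatr_eq0 -lt0n.
Qed.

Lemma common_den (s : seq rat) : exists D : int, D != 0 /\
  forall q, q \in s -> exists c : int, q * D%:~R = c%:~R.
Proof.
elim: s => [|q s [D [hD IH]]]; first by exists 1.
exists (D * denq q); split; first by rewrite mulf_neq0 // denq_neq0.
move=> q'; rewrite inE => /orP [/eqP ->|hq'].
  by exists (numq q * D); rewrite !intrM numqE mulrCA [RHS]mulrC.
have [c hc] := IH _ hq'.
by exists (c * denq q); rewrite intrM mulrA hc intrM.
Qed.

Section Indep.
Variable L : fieldExtType rat.
Variable R : L -> Prop.
Hypothesis hR : is_subring R.
Variable l : nat.
Hypothesis hl : prime l.

Definition sumz (y : seq L) (c : nat -> int) := \sum_(i < size y) y`_i *~ c i.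

Definition indep (y : seq L) := forall c : nat -> int,
  (exists r, R r /\ sumz y c = r *+ l) -> forall i : 'I_(size y), (l%:Z %| c i)%Z.

Lemma descent y : indep y -> forall n (c : nat -> int),
  (\sum_(i < size y) `|c i| <= n)%N -> sumz y c = 0 -> forall i : 'I_(size y), c i = 0.
Proof.
move=> hy n; elim: n => [|n IH] c hs h0 i.
  apply/eqP; rewrite -absz_eq0; apply/eqP.
  have : (`|c i| <= \sum_(j < size y) `|c j|)%N by rewrite (bigD1 i) //= leq_addr.
  lia.
have hd : forall j : 'I_(size y), (l%:Z %| c j)%Z.
  by apply: hy; exists 0; split; [exact: R0 | rewrite h0 mul0rn].
pose c' j := (c j %/ l%:Z)%Z.
have hc (j : 'I_(size y)) : c j = c' j * l%:Z by rewrite divzK.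
have h0' : sumz y c' = 0.
  have : sumz y c' *+ l = 0.
    rewrite -h0 /sumz -sumrMnl; apply: eq_bigr => j _.
    by rewrite hc mulrzA.
  move/eqP; rewrite -mulr_natr mulf_eq0 (negbTE (natrL_neq0 _ (prime_gt0 hl))) orbF.
  by move/eqP.
have hs' : (\sum_(j < size y) `|c' j| <= n)%N.
  have e : (\sum_(j < size y) `|c j| = (\sum_(j < size y) `|c' j|) * l)%N.
    rewrite big_distrl /=; apply: eq_bigr => j _; by rewrite hc abszM.
  have l2 := prime_gt1 hl.
  rewrite e in hs; move: hs; set S := (\sum_(j < size y) `|c' j|)%N.
  have : (S * 2 <= S * l)%N by rewrite leq_mul2l l2 orbT.
  lia.
by rewrite hc (IH _ hs' h0') mul0r.
Qed.

Lemma indep_free y : indep y -> free y.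
Proof.
move=> hy; suff: free (in_tuple y) by []. apply/freeP => k hk.
have [D [hD hc]] := common_den [seq k i | i <- enum 'I_(size y)].
pose kk (n : nat) := if (insub n : option 'I_(size y)) is Some i then k i else 0.
have ekk (i : 'I_(size y)) : kk i = k i by rewrite /kk valK.
pose c n := numq (kk n * D%:~R).
have ec (i : 'I_(size y)) : (c i)%:~R = k i * D%:~R.
  have [d hd] := hc (k i) (map_f _ (mem_enum _ i)).
  by rewrite /c ekk hd numq_int.
have h0 : sumz y c = 0.
  rewrite /sumz.
  transitivity (D%:~R *: \sum_(i < size y) k i *: (in_tuple y)`_i); last first.
    by rewrite hk scaler0.
  rewrite scaler_sumr; apply: eq_bigr => i _.
  by rewrite -scaler_int ec scalerA mulrC.
move=> i; have := descent hy (leqnn _) h0 i.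
move/(congr1 (fun z : int => (z%:~R : rat))); rewrite ec => /eqP.
by rewrite mulf_eq0 intr_eq0 (negbTE hD) orbF => /eqP.
Qed.

Lemma indep_size y : indep y -> (size y <= \dim {:L})%N.
Proof.
move=> /indep_free /eqP <-; exact: dimvS (subvf _).
Qed.
End Indep.


Section Cover.
Variable L : fieldExtType rat.
Variable R : L -> Prop.
Hypothesis hR : is_subring R.
Variable l : nat.
Hypothesis hl : prime l.

Definition allR (y : seq L) := forall z, z \in y -> R z.

Lemma sumz_rcons (y : seq L) (x : L) (c : nat -> int) : sumz (rcons y x) c = sumz y c + x *~ c (size y).
Proof.
rewrite /sumz size_rcons big_ord_recr /= nth_rcons ltnn eqxx; congr (_ + _).
by apply: eq_bigr => i _; rewrite nth_rcons ltn_ord.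
Qed.

Lemma exists_maximal : exists y, allR y /\ indep R l y /\
  forall x, R x -> ~ indep R l (rcons y x).
Proof.
apply: NNPP => H.
have ext : forall y, allR y -> indep R l y -> exists x, R x /\ indep R l (rcons y x).
  move=> y ay iy; apply: NNPP => nx; apply: H; exists y; split => //; split => //.
  by move=> x hx ix; apply: nx; exists x.
have big : forall k, exists y, size y = k /\ allR y /\ indep R l y.
  elim=> [|k [y [sy [ay iy]]]].
    by exists [::]; split => //; split => // c _ [].
  have [x [hx ix]] := ext y ay iy.
  exists (rcons y x); split; first by rewrite size_rcons sy.
  split => // z; rewrite mem_rcons inE => /orP [/eqP -> //|]; exact: ay.
have [y [sy [_ iy]]] := big (\dim {:L}).+1.
have := indep_size hR hl iy; rewrite sy ltnn //.
Qed.

Definition fin_mod (m : nat) := exists T : seq L, forall x, R x ->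
  exists t, t \in T /\ exists r, R r /\ x - t = r *+ m.

Lemma fin_mod_prime : fin_mod l.
Proof.
have [y [ay [iy my]]] := exists_maximal.
pose T := [seq \sum_(i < size y) y`_i *+ (f : {ffun 'I_(size y) -> 'I_l}) i | f <- enum {ffun 'I_(size y) -> 'I_l}].
exists T => x hx.
have nind := my x hx.
have [c hc] : exists c : nat -> int, ~ ((exists r, R r /\ sumz (rcons y x) c = r *+ l) ->
    forall i : 'I_(size (rcons y x)), (l%:Z %| c i)%Z).
  by apply: not_all_ex_not.
have [[r [hr hs]] hi] := imply_to_and _ _ hc.
have [i hi'] := not_all_ex_not _ _ hi.
rewrite sumz_rcons in hs.
have yR : forall j : 'I_(size y), R y`_j by move=> j; apply: ay; apply: mem_nth.
have ncl : ~ (l%:Z %| c (size y))%Z.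
  move=> hd; apply: hi'.
  have hy : forall j : 'I_(size y), (l%:Z %| c j)%Z.
    apply: iy; exists (r - x *~ (c (size y) %/ l%:Z)%Z); split.
      by apply: RB => //; apply: Rmulz.
    have e : c (size y) = (c (size y) %/ l%:Z)%Z * l%:Z by rewrite divzK.
    have -> : sumz y c = r *+ l - x *~ c (size y) by rewrite -hs addrK.
    rewrite {1}e; ring.
  have hi2 : (val i < (size y).+1)%N by rewrite -(size_rcons y x); exact: ltn_ord.
  move: hi2; rewrite ltnS leq_eqVlt => /orP [/eqP ->//|hlt].
  exact: (hy (Ordinal hlt)).
have cop : gcdz (c (size y)) l%:Z = 1.
  have cp : coprime l `|c (size y)| by rewrite prime_coprime //; apply/negP.
  by rewrite /gcdz gcdnC (eqP cp).
have [u [v huv]] := Bezoutz (c (size y)) l%:Z.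
rewrite cop in huv.
have l0 : (0 < l%:Z) by rewrite ltz_nat prime_gt0.
pose e (j : nat) := ((- (c j * u)) %% l%:Z)%Z.
pose q (j : nat) := ((- (c j * u)) %/ l%:Z)%Z.
have eq j : - (c j * u) = q j * l%:Z + e j by rewrite /q /e -divz_eq.
have e0 j : 0 <= e j by rewrite modz_ge0 // eqz_nat -lt0n prime_gt0.
have el j : (`|e j| < l)%N.
  by rewrite -ltz_nat gez0_abs // ltz_pmod.
pose f := [ffun j : 'I_(size y) => Ordinal (el j)].
exists (\sum_(i < size y) y`_i *+ f i); split.
  rewrite /T; apply: (map_f (fun g : {ffun 'I_(size y) -> 'I_l} => \sum_(i0 < size y) y`_i0 *+ g i0)).
  by rewrite mem_enum.
exists (r *~ u + x *~ v + \sum_(j < size y) y`_j *~ q j); split.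
  apply: (RD hR); first by apply: (RD hR); apply: (Rmulz hR).
  by apply: (Rsum hR) => j; apply: (Rmulz hR).
have key : - (sumz y c) *~ u = \sum_(j < size y) y`_j *+ f j
            + (\sum_(j < size y) y`_j *~ q j) *+ l.
  rewrite /sumz -sumrN mulrz_suml -sumrMnl -big_split /=.
  apply: eq_bigr => j _; rewrite ffunE /=.
  rewrite -[y`_j *+ `|e j|]/(y`_j *~ (`|e j|%N)%:Z) gez0_abs //.
  have -> : e j = - (c j * u) - q j * l%:Z by rewrite eq; ring.
  ring.
have hs' : sumz y c = r *+ l - x *~ c (size y) by rewrite -hs addrK.
rewrite hs' in key.
have HF : \sum_(j < size y) y`_j *+ f j = - (r *+ l - x *~ c (size y)) *~ u
   - (\sum_(j < size y) y`_j *~ q j) *+ l by rewrite key addrK.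
rewrite HF {1}(_ : x = x *~ (u * c (size y) + v * l%:Z)); last by rewrite huv.
ring.
Qed.
End Cover.


Lemma fin_mod_all (L : fieldExtType rat) (R : L -> Prop) (hR : is_subring R) m :
  (0 < m)%N -> fin_mod R m.
Proof.
elim: m {-2}m (leqnn m) => [|n IH] m hm m0; first by move: hm m0; case: m.
case: (ltngtP m 1) => [|hm1|->].
- by case: m m0 hm.
- have pl := pdiv_prime hm1.
  have dl := pdiv_dvd m.
  set l := pdiv m in pl dl.
  have hmd : m = (m %/ l * l)%N by rewrite divnK.
  have hm2 : (0 < m %/ l)%N by rewrite divn_gt0 ?prime_gt0 // dvdn_leq.
  have hm2' : (m %/ l <= n)%N.
    have := prime_gt1 pl; move: hm2 hm; rewrite {2 3}hmd; set k := (m %/ l)%N.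
    move=> h1 h2 h3; nia.
  have [T1 h1] := fin_mod_prime hR pl.
  have [T2 h2] := IH _ hm2' hm2.
  exists [seq t + t' *+ l | t <- T1, t' <- T2] => x hx.
  have [t [tT [r [hr ex]]]] := h1 x hx.
  have [t' [tT' [r' [hr' er]]]] := h2 r hr.
  exists (t + t' *+ l); split; first by apply: allpairs_f.
  exists r'; split => //.
  rewrite hmd mulrnA -er.
  have -> : x = r *+ l + t by rewrite -ex subrK.
  ring.
- exists [:: 0] => x hx; exists 0; split; first by rewrite inE.
  by exists x; split; rewrite // subr0.
Qed.


Section Main.
Variable L : fieldExtType rat.
Variable R : L -> Prop.
Hypothesis hR : is_subring R.

Lemma Rexp x n : R x -> R (x ^+ n).
Proof. move=> h; elim: n => [|n IH]; first exact: (R1 hR). by rewrite exprS; apply: (RM hR). Qed.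

Lemma Jsum_seq (J : L -> Prop) (hJ : is_ideal R J) (T : eqType) (s : seq T) (F : T -> L) :
  (forall i, i \in s -> J (F i)) -> J (\sum_(i <- s) F i).
Proof.
move=> h; rewrite big_seq; apply: (big_ind J); [exact: (J0 hJ)|exact: (JD hJ)|exact: h].
Qed.

Lemma int_in_ideal (J : L -> Prop) (hJ : is_ideal R J) n :
  has_index R J n -> exists m, (0 < m)%N /\ J m%:R.
Proof.
case=> r [hr hinj hcov].
have [f hf] : exists f : 'I_n.+1 -> 'I_n, forall k : 'I_n.+1, J ((val k)%:R - r (f k)).
  apply: (@fin_all_exists _ (fun _ => 'I_n) (fun (k : 'I_n.+1) (i : 'I_n) => J ((val k)%:R - r i))).
  move=> k; exact: (hcov _ (Rn hR (val k))).
have : ~~ injectiveb f.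
  apply/negP => /injectiveP /leq_card; by rewrite !card_ord ltnn.
case/injectivePn => k1 [k2 hne hfe].
have hd : J ((val k1)%:R - (val k2)%:R).
  have := JB hJ (hf k1) (hf k2); rewrite hfe.
  by have -> : forall a b c : L, a - c - (b - c) = a - b by move=> *; ring.
case: (ltngtP k1 k2) => [hlt|hlt|heq].
- exists (k2 - k1)%N; split; first by rewrite subn_gt0.
  by rewrite natrB ?(ltnW hlt) // -opprB; apply: (JN hJ).
- exists (k1 - k2)%N; split; first by rewrite subn_gt0.
  by rewrite natrB ?(ltnW hlt).
- by move: hne; rewrite (val_inj heq) eqxx.
Qed.

Definition gspan (Q : L -> Prop) (G : seq L) (y : L) :=
  exists e : 'I_(size G) -> L, (forall j, Q (e j)) /\ y = \sum_j e j * G`_j.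

Lemma span0 Q G : Q 0 -> gspan Q G 0.
Proof. by move=> h; exists (fun _ => 0); split => //; rewrite big1 // => j _; rewrite mul0r. Qed.

Lemma spanD Q G y z : (forall a b, Q a -> Q b -> Q (a + b)) ->
  gspan Q G y -> gspan Q G z -> gspan Q G (y + z).
Proof.
move=> hQ [e [he ->]] [e' [he' ->]]; exists (fun j => e j + e' j); split; first by move=> j; apply: hQ.
by rewrite -big_split; apply: eq_bigr => j _; rewrite mulrDl.
Qed.

Lemma span_mul (Q Q' : L -> Prop) G a y : (forall b, Q b -> Q' (a * b)) ->
  gspan Q G y -> gspan Q' G (a * y).
Proof.
move=> hQ [e [he ->]]; exists (fun j => a * e j); split; first by move=> j; apply: hQ.
by rewrite mulr_sumr; apply: eq_bigr => j _; rewrite mulrA.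
Qed.

Lemma span_mem Q (G : seq L) z : Q 0 -> Q 1 -> z \in G -> gspan Q G z.
Proof.
move=> h0 h1 hz; have hzi : (index z G < size G)%N by rewrite index_mem.
pose j0 : 'I_(size G) := Ordinal hzi.
exists (fun j => if j == j0 then 1 else 0); split; first by move=> j; case: ifP.
rewrite (bigD1 j0) //= eqxx mul1r big1 ?addr0; first by rewrite nth_index.
by move=> j /negbTE ->; rewrite mul0r.
Qed.

End Main.

From mathcomp Require Import all_fingroup.
From mathcomp Require Import zify ring.
Import GRing.Theory Num.Theory.
Local Open Scope ring_scope.

Section Main2.
Variable L : fieldExtType rat.
Variable R : L -> Prop.
Hypothesis hR : is_subring R.
Variable I : L -> Prop.
Hypothesis hI : is_ideal R I.
Variable P : L -> Prop.
Hypothesis hP : is_ideal R P.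

Lemma fg_ideal m : (0 < m)%N -> I m%:R ->
  exists G : seq L, (forall z, z \in G -> I z) /\ forall y, I y -> gspan R G y.
Proof.
move=> m0 hm.
have [T hT] := fin_mod_all hR m0.
pose Qt t z := I z /\ ((exists z', I z' /\ exists r, R r /\ z' - t = r *+ m) ->
   exists r, R r /\ z - t = r *+ m).
have exQ t : exists z, Qt t z.
  case: (classic (exists z', I z' /\ exists r, R r /\ z' - t = r *+ m)) => [[z' hz']|nz].
    by exists z'; split; [case: hz' | move=> _; case: hz'].
  by exists 0; split; [exact: (J0 hI) | move=> h; case: (nz h)].
pose h t := epsilon (inhabits 0) (Qt t).
have hh t : Qt t (h t) := epsilon_spec _ _ (exQ t).
exists (m%:R :: map h T); split.
  move=> z; rewrite inE => /orP [/eqP -> //|/mapP [t _ ->]].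
  by case: (hh t).
move=> y hy; have hyR := JR hI hy.
have [t [tT [r [hr e]]]] := hT y hyR.
have [r' [hr' e']] : exists r, R r /\ h t - t = r *+ m.
  by apply: (proj2 (hh t)); exists y; split => //; exists r.
have -> : y = (r - r') * m%:R + h t.
  by rewrite mulrBl !mulr_natr -e -e'; ring.
apply: spanD; first by move=> a b; apply: (RD hR).
  apply: (span_mul (Q := R) (Q' := R)).
    by move=> b hb; apply: (RM hR) => //; apply: (RB hR).
  by apply: span_mem; [exact: (R0 hR)|exact: (R1 hR)|exact: mem_head].
apply: span_mem; [exact: (R0 hR)|exact: (R1 hR)|].
by rewrite inE; apply/orP; right; apply: map_f.
Qed.

Lemma pI_single a b : P a -> I b -> prod_ideal P I (a * b).
Proof.
move=> ha hb; exists [:: (a, b)]; split; last by rewrite big_seq1.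
by move=> ab; rewrite inE => /eqP ->.
Qed.

Lemma pI_add x y : prod_ideal P I x -> prod_ideal P I y -> prod_ideal P I (x + y).
Proof.
move=> [s [hs ->]] [s' [hs' ->]]; exists (s ++ s'); split; last by rewrite big_cat.
by move=> ab; rewrite mem_cat => /orP [/hs|/hs'].
Qed.

Lemma pI_mulR r x : R r -> prod_ideal P I x -> prod_ideal P I (r * x).
Proof.
move=> hr [s [hs ->]]; exists [seq (r * ab.1, ab.2) | ab <- s]; split.
  move=> ab /mapP [[a b] hab ->] /=; have [ha hb] := hs _ hab.
  by split => //; apply: (JM hP).
by rewrite big_map mulr_sumr; apply: eq_bigr => ab _; rewrite mulrA.
Qed.

Lemma pI_neg x : prod_ideal P I x -> prod_ideal P I (- x).
Proof.
move=> hx; rewrite -mulN1r; apply: pI_mulR => //; apply: (RN hR); exact: (R1 hR).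
Qed.

Lemma pI_sub x y : prod_ideal P I x -> prod_ideal P I y -> prod_ideal P I (x - y).
Proof. by move=> hx hy; apply: pI_add => //; apply: pI_neg. Qed.

Lemma pI_I x : prod_ideal P I x -> I x.
Proof.
move=> [s [hs ->]]; apply: (Jsum_seq hI) => ab hab; have [ha hb] := hs _ hab.
by apply: (JM hI) => //; apply: (JR hP).
Qed.

Lemma pI_span (G : seq L) z : (forall y, I y -> gspan R G y) ->
  prod_ideal P I z -> gspan P G z.
Proof.
move=> hc [s [hs ->]]; elim: s hs => [|[a b] s IH] hs.
  by rewrite big_nil; apply: span0; exact: (J0 hP).
rewrite big_cons; apply: spanD; first by move=> *; apply: (JD hP).
  have [ha hb] := hs (a, b) (mem_head _ _).
  by apply: span_mul (hc _ hb) => c hc'; apply: (JMr hP).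
by apply: IH => ab hab; apply: hs; rewrite inE hab orbT.
Qed.

Lemma det_cong n (A B : 'M[L]_n) : (forall i j, R (A i j)) -> (forall i j, R (B i j)) ->
  (forall i j, P (A i j - B i j)) -> P (\det A - \det B).
Proof.
move=> hA hB hAB; rewrite /determinant -sumrB; apply: (Jsum hP) => s.
rewrite -mulrBr; apply: (JM hP); first by apply: Rexp => //; apply: (RN hR); exact: (R1 hR).
have : R (\prod_i A i (s i)) /\ R (\prod_i B i (s i)) /\
   P (\prod_i A i (s i) - \prod_i B i (s i)).
  apply: (big_ind2 (fun a b => R a /\ R b /\ P (a - b))).
  - by split; [exact: (R1 hR)|split; [exact: (R1 hR)|rewrite subrr; exact: (J0 hP)]].
  - move=> x1 x2 y1 y2 [h1 [h2 h3]] [h4 [h5 h6]]; split; first exact: (RM hR).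
    split; first exact: (RM hR).
    have -> : x1 * y1 - x2 * y2 = x1 * (y1 - y2) + (x1 - x2) * y2 by ring.
    by apply: (JD hP); [apply: (JM hP) | apply: (JMr hP)].
  - by move=> i _; split; [|split].
by case=> _ [].
Qed.

Lemma nakayama (G : seq L) : (forall z, z \in G -> prod_ideal P I z) ->
  (forall y, I y -> gspan R G y) -> ~ P 1 -> forall y, I y -> y = 0.
Proof.
move=> hG hc nP1.
have [A hA] : exists A : 'I_(size G) -> 'I_(size G) -> L, forall j,
    (forall k, P (A j k)) /\ G`_j = \sum_k A j k * G`_k.
  have hj : forall j : 'I_(size G), exists e : 'I_(size G) -> L,
      (forall k, P (e k)) /\ G`_j = \sum_k e k * G`_k.
    move=> j; apply: (pI_span hc); apply: hG; exact: mem_nth.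
  have [A hA] := fin_all_exists hj.
  by exists A.
pose M := \matrix_(j, k) A j k : 'M[L]_(size G).
pose g := \col_j G`_j : 'cV[L]_(size G).
have e1 : (1%:M - M) *m g = 0.
  apply/matrixP => j k; rewrite mulmxBl mul1mx !mxE.
  under eq_bigr do rewrite !mxE.
  by rewrite -(proj2 (hA j)) subrr.
have e2 : (\det (1%:M - M)) *: g = 0.
  by rewrite -mul_scalar_mx -mul_adj_mx -mulmxA e1 mulmx0.
have [d0|dn0] := eqVneq (\det (1%:M - M)) 0.
  exfalso; apply: nP1.
  have hc1 : P (\det (1%:M - M) - \det (1%:M : 'M[L]_(size G))).
    apply: det_cong => i j; rewrite !mxE.
    - by apply: (RB hR); [exact: (Rn hR)|apply: (JR hP); case: (hA i)].
    - exact: (Rn hR).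
    - have -> : forall a b : L, a - b - a = - b by move=> *; ring.
      by apply: (JN hP); case: (hA i).
  move: hc1; rewrite det1 d0 sub0r => /(JN hP); by rewrite opprK.
have g0 : g = 0.
  by move: e2 => /eqP; rewrite scaler_eq0 (negbTE dn0) /= => /eqP.
move=> y /hc [e [_ ->]]; apply: big1 => k _.
have := congr1 (fun g : 'cV[L]_(size G) => g k 0) g0; rewrite !mxE => ->.
by rewrite mulr0.
Qed.

End Main2.


Lemma max_inv (L : fieldExtType rat) (R P : L -> Prop) (hR : is_subring R)
  (hP : maximal_ideal R P) r : R r -> ~ P r ->
  exists a s, P a /\ R s /\ 1 = a + s * r.
Proof.
case: hP => hPi nP1 hmax hr npr.
pose J z := exists a s, P a /\ R s /\ z = a + s * r.
have hJ : is_ideal R J.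
  split.
  - move=> z [a [s [ha [hs ->]]]]; apply: (RD hR); first exact: (JR hPi).
    exact: (RM hR).
  - by exists 0, 0; split; [exact: (J0 hPi)|split; [exact: (R0 hR)|ring]].
  - move=> x y [a [s [ha [hs ->]]]] [a' [s' [ha' [hs' ->]]]].
    exists (a - a'), (s - s'); split; first exact: (JB hPi).
    by split; [exact: (RB hR)|ring].
  - move=> t x ht [a [s [ha [hs ->]]]].
    exists (t * a), (t * s); split; first exact: (JM hPi).
    by split; [exact: (RM hR)|ring].
have sub : forall x, P x -> J x.
  by move=> x hx; exists x, 0; split => //; split; [exact: (R0 hR)|ring].
case: (hmax J hJ sub) => [hJP|[a [s [ha [hs e]]]]].
  exfalso; apply: npr; apply: hJP; exists 0, 1; split; first exact: (J0 hPi).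
  by split; [exact: (R1 hR)|ring].
by exists a, s.
Qed.

Theorem proposition2p7 (L : fieldExtType rat) (R I P : L -> Prop)
  (hR : is_subring R) (hI : is_ideal R I) (hI0 : nonzero_ideal I)
  (hP : maximal_ideal R P) (nI nP nPI : nat)
  (HnI : has_index R I nI) (HnP : has_index R P nP)
  (HnPI : has_index R (prod_ideal P I) nPI) :
  (nI * nP <= nPI)%N.
Proof.
have [hPi nP1 _] := hP.
have [m [m0 hm]] := int_in_ideal hR hI HnI.
have [G [hG hcov]] := fg_ideal hR hI m0 hm.
have [y [hy npy]] : exists y, I y /\ ~ prod_ideal P I y.
  apply: NNPP => H.
  have allp : forall z, I z -> prod_ideal P I z.
    by move=> z hz; apply: NNPP => nz; apply: H; exists z.
  have := nakayama hR hPi (fun z hz => allp z (hG z hz)) hcov nP1.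
  case: hI0 => x [hx /eqP]; by move=> nx /(_ x hx).
have hyR := JR hI hy.
case: HnI => rI [hrI injI covI].
case: HnP => rP [hrP injP covP].
case: HnPI => rPI [hrPI injPI covPI].
pose F (p : 'I_nI * 'I_nP) := rI p.1 + rP p.2 * y.
have FR p : R (F p) by apply: (RD hR) => //; apply: (RM hR).
have hF : forall p : 'I_nI * 'I_nP, exists k : 'I_nPI, prod_ideal P I (F p - rPI k).
  by move=> p; apply: covPI.
have [g hg] := fin_all_exists hF.
have ginj : injective g.
  move=> [i1 j1] [i2 j2] e.
  have d : prod_ideal P I (F (i1, j1) - F (i2, j2)).
    have := pI_sub hR hPi (hg (i1, j1)) (hg (i2, j2)); rewrite e.
    by have -> : forall a b c : L, a - c - (b - c) = a - b by move=> *; ring.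
  have ei : i1 = i2.
    apply: injI.
    have -> : rI i1 - rI i2 = (F (i1, j1) - F (i2, j2)) - (rP j1 - rP j2) * y.
      by rewrite /F /=; ring.
    apply: (JB hI); first exact: (pI_I hI hPi d).
    by apply: (JM hI) => //; apply: (RB hR).
  subst i2; congr (_, _).
  apply: injP; apply: NNPP => nd.
  have [a [s [ha [hs e1]]]] := max_inv hR hP (RB hR (hrP j1) (hrP j2)) nd.
  apply: npy.
  have -> : y = a * y + s * (F (i1, j1) - F (i1, j2)).
    by rewrite /F /=; rewrite -[y in LHS]mul1r e1; ring.
  apply: pI_add; first exact: pI_single.
  exact: (pI_mulR hPi).
have := @leq_card _ _ g ginj; by rewrite card_prod !card_ord.
Qed.
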